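(* Let $m>n>0$ and $c>0$ be constants. Let $f,g\in C(\mathbb{R}_0^+,\mathbb{R}_0^+)$, let $w\in C(\mathbb{R}_0^+,\mathbb{R}_0^+)$ be nondecreasing with $w(x)>0$ for $x>0$, and let $\alpha\in C^1(\mathbb{R}_0^+,\mathbb{R}_0^+)$ be nondecreasing with $\alpha(t)\le t$. Suppose $u\in C(\mathbb{R}_0^+,\mathbb{R}_0^+)$ satisfies, for all $t\ge0$, $$u^m(t)\le c^{m/(m-n)}+\frac{m}{m-n}\Big(\int_0^{\alpha(t)}f(s)u^n(s)w(u(s))\,ds+\int_0^t g(s)u^n(s)w(u(s))\,ds\Big).$$ Let $\Psi(x)=\int_1^x\frac{ds}{w(s^{1/(m-n)})}$ for $x>0$, and let $\tau>0$ be such that for all $t\in[0,\tau]$, $$\Psi(c)+\int_0^{\alpha(t)}f(s)\,ds+\int_0^{t}g(s)\,ds\in\mathrm{Dom}(\Psi^{-1}).$$ Then for all $t\in[0,\tau]$, $$u(t)\le\Big\{\Psi^{-1}\Big[\Psi(c)+\int_0^{\alpha(t)}f(s)\,ds+\int_0^{t}g(s)\,ds\Big]\Big\}^{1/(m-n)}.$$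
   Context: $\mathbb{R}_0^+=[0,\infty)$. $\Psi$ is strictly increasing on $(0,\infty)$, $\Psi^{-1}$ denotes its inverse, and $\mathrm{Dom}(\Psi^{-1})=\Psi((0,\infty))$. *)

(* Defs.v *)
From Stdlib Require Import Reals Lra ClassicalEpsilon.
Open Scope R_scope.

(* Real power x^a for x >= 0 and a > 0, with the convention 0^a = 0
   (Stdlib's Rpower 0 a = 1, so we patch it at 0). *)
Definition rpow (x a : R) : R :=
  if Rle_dec x 0 then 0 else Rpower x a.

(* Definite Riemann integral int_a^b f (oriented, as in Stdlib's RiemannInt);
   its value is the RiemannInt whenever f is Riemann integrable on [a,b]. *)
Definition integral (f : R -> R) (a b : R) : R :=
  epsilon (inhabits 0)
    (fun I => exists pr : Riemann_integrable f a b, RiemannInt pr = I).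

Definition cont_nonneg (f : R -> R) : Prop :=
  forall x, 0 <= x -> forall eps, 0 < eps -> exists delta, 0 < delta /\
    forall y, 0 <= y -> Rabs (y - x) < delta -> Rabs (f y - f x) < eps.

Definition nonneg_valued (f : R -> R) : Prop :=
  forall x, 0 <= x -> 0 <= f x.

Definition C0_nonneg (f : R -> R) : Prop := cont_nonneg f /\ nonneg_valued f.

Definition nondecr_nonneg (f : R -> R) : Prop :=
  forall x y, 0 <= x -> x <= y -> f x <= f y.

Definition deriv_nonneg (f f' : R -> R) : Prop :=
  forall x, 0 <= x -> forall eps, 0 < eps -> exists delta, 0 < delta /\
    forall y, 0 <= y -> y <> x -> Rabs (y - x) < delta ->
      Rabs ((f y - f x) / (y - x) - f' x) < eps.

Definition C1_nonneg (f : R -> R) : Prop :=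
  nonneg_valued f /\ exists f', deriv_nonneg f f' /\ cont_nonneg f'.

(* Psi(x) = int_1^x ds / w(s^(1/(m-n))), for x > 0; k stands for m - n. *)
Definition Psi (w : R -> R) (k : R) (x : R) : R :=
  integral (fun s => / w (rpow s (/ k))) 1 x.

Definition in_Dom_Psi_inv (w : R -> R) (k : R) (y : R) : Prop :=
  exists x, 0 < x /\ Psi w k x = y.

(* Psi^{-1}(y): the x > 0 with Psi(x) = y (unique, Psi strictly increasing). *)
Definition Psi_inv (w : R -> R) (k : R) (y : R) : R :=
  epsilon (inhabits 1) (fun x => 0 < x /\ Psi w k x = y).

(* Main.v *)
Require Import Defs.
From Stdlib Require Import Reals Lra Psatz ClassicalEpsilon FunctionalExtensionality.
Open Scope R_scope.

Lemma cpt_intro f x : (forall eps, 0 < eps -> exists d, 0 < d /\ forall y, Rabs (y - x) < d -> Rabs (f y - f x) < eps) -> continuity_pt f x.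
Proof.
  intros H eps Heps. destruct (H eps Heps) as [d [Hd Hy]].
  exists d; split; [exact Hd|]. intros y [_ Hy']. simpl in *. unfold Rdist in *. now apply Hy.
Qed.

Lemma cpt_elim f x : continuity_pt f x -> forall eps, 0 < eps -> exists d, 0 < d /\ forall y, Rabs (y - x) < d -> Rabs (f y - f x) < eps.
Proof.
  intros H eps Heps. destruct (H eps Heps) as [d [Hd Hy]].
  exists d; split; [exact Hd|]. intros y Hyx.
  destruct (Req_dec y x) as [->|Hne].
  - unfold Rminus; rewrite Rplus_opp_r, Rabs_R0; lra.
  - apply (Hy y). split; [split; [exact I| auto] |]. simpl; unfold Rdist; exact Hyx.
Qed.

Definition ctn (f : R -> R) := forall x, continuity_pt f x.

Lemma Rmax_lip a x y : Rabs (Rmax a y - Rmax a x) <= Rabs (y - x).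
Proof. unfold Rmax; destruct (Rle_dec a y), (Rle_dec a x); split_Rabs; lra. Qed.

Lemma ctn_Rmax a : ctn (fun s => Rmax a s).
Proof.
  intros x; apply cpt_intro; intros eps He; exists eps; split; auto.
  intros y Hy; eapply Rle_lt_trans; [apply Rmax_lip| exact Hy].
Qed.

Lemma ctn_max0 f : cont_nonneg f -> ctn (fun s => f (Rmax 0 s)).
Proof.
  intros Hf x; apply cpt_intro; intros eps He.
  destruct (Hf (Rmax 0 x) (Rmax_l _ _) eps He) as [d [Hd H]].
  exists d; split; auto. intros y Hy. apply H; [apply Rmax_l|].
  eapply Rle_lt_trans; [apply Rmax_lip| exact Hy].
Qed.

Lemma comp_nonneg w q x : cont_nonneg w -> continuity_pt q x -> (forall s, 0 <= q s) ->
  continuity_pt (fun s => w (q s)) x.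
Proof.
  intros Hw Hq Hpos.
  assert (E : (fun s => w (q s)) = comp (fun y => w (Rmax 0 y)) q).
  { apply functional_extensionality; intro s; unfold comp. now rewrite Rmax_right by apply Hpos. }
  rewrite E. apply continuity_pt_comp; [exact Hq| apply ctn_max0; exact Hw].
Qed.

Lemma cont_Rpower x e : 0 < x -> continuity_pt (fun y => Rpower y e) x.
Proof.
  intros Hx. apply derivable_continuous_pt. exists (e * Rpower x (e - 1)).
  now apply derivable_pt_lim_power.
Qed.

Lemma rpow_pos x e : 0 < x -> rpow x e = Rpower x e.
Proof. intros; unfold rpow; destruct (Rle_dec x 0); lra. Qed.

Lemma Rpower_pos x e : 0 < Rpower x e.
Proof. unfold Rpower; apply exp_pos. Qed.

Lemma rpow_nonneg x e : 0 <= rpow x e.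
Proof. unfold rpow; destruct (Rle_dec x 0); [lra| left; apply Rpower_pos]. Qed.

Lemma ctn_rpow e : 0 < e -> ctn (fun y => rpow y e).
Proof.
  intros He x.
  destruct (Rlt_le_dec 0 x) as [Hx|Hx].
  - apply continuity_pt_locally_ext with (f := fun y => Rpower y e) (a := x).
    + exact Hx.
    + intros y Hy; unfold Rdist in Hy. rewrite rpow_pos; auto. split_Rabs; lra.
    + now apply cont_Rpower.
  - destruct Hx as [Hx|Hx].
    + apply continuity_pt_locally_ext with (f := fun y => 0) (a := - x).
      * lra.
      * intros y Hy; unfold Rdist in Hy. unfold rpow. destruct (Rle_dec y 0); auto.
        split_Rabs; lra.
      * apply continuity_pt_const. intros a b; reflexivity.
    + subst x. apply cpt_intro. intros eps Heps.
      exists (Rpower eps (/ e)). split; [apply Rpower_pos|].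
      intros y Hy. unfold rpow at 2. destruct (Rle_dec 0 0); [|lra].
      unfold rpow. destruct (Rle_dec y 0).
      * rewrite Rminus_0_r, Rabs_R0; lra.
      * rewrite Rminus_0_r, Rabs_pos_eq by (left; apply Rpower_pos).
        rewrite Rminus_0_r in Hy. rewrite Rabs_pos_eq in Hy by lra.
        replace eps with (Rpower (Rpower eps (/ e)) e).
        -- apply Rlt_Rpower_l; lra.
        -- rewrite Rpower_mult. rewrite Rinv_l by lra. now apply Rpower_1.
Qed.

Lemma integ_RI f a b (pr : Riemann_integrable f a b) : integral f a b = RiemannInt pr.
Proof.
  unfold integral.
  destruct (epsilon_spec (inhabits 0) (fun I => exists pr : Riemann_integrable f a b, RiemannInt pr = I)) as [pr' H].
  - exists (RiemannInt pr); exists pr; reflexivity.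
  - rewrite <- H. apply RiemannInt_P5.
Qed.
Arguments integ_RI {f a b}.

Definition ctn_RI f a b (H : ctn f) : Riemann_integrable f a b.
Proof.
  destruct (Rle_dec a b) as [Hab|Hab].
  - apply continuity_implies_RiemannInt; auto.
  - apply RiemannInt_P1. apply continuity_implies_RiemannInt; [lra| auto].
Defined.

Lemma integ_chasles f a b c : ctn f -> integral f a b + integral f b c = integral f a c.
Proof.
  intros H. rewrite (integ_RI (ctn_RI f a b H)), (integ_RI (ctn_RI f b c H)), (integ_RI (ctn_RI f a c H)).
  apply RiemannInt_P26.
Qed.

Lemma integ_aa f a : integral f a a = 0.
Proof. rewrite (integ_RI (RiemannInt_P7 f a)). apply RiemannInt_P9. Qed.

Lemma integ_nonneg f a b : ctn f -> a <= b -> (forall x, a <= x <= b -> 0 <= f x) -> 0 <= integral f a b.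
Proof.
  intros H Hab Hf. rewrite (integ_RI (ctn_RI f a b H)).
  rewrite <- (Rmult_0_l (b - a)), <- (RiemannInt_P15 (RiemannInt_P14 a b 0)).
  apply RiemannInt_P19; auto. intros x Hx; unfold fct_cte; apply Hf; lra.
Qed.

Lemma integ_mono f x1 x2 : ctn f -> (forall x, 0 <= f x) -> x1 <= x2 -> forall a, integral f a x1 <= integral f a x2.
Proof.
  intros H Hf Hx a. rewrite <- (integ_chasles f a x1 x2 H).
  assert (0 <= integral f x1 x2) by (apply integ_nonneg; auto). lra.
Qed.

Lemma integ_ext f g a b : ctn g -> (forall x, Rmin a b <= x <= Rmax a b -> f x = g x) -> integral f a b = integral g a b.
Proof.
  intros Hg Hfg.
  assert (prf : Riemann_integrable f a b).
  { apply Riemann_integrable_ext with g; [intros; symmetry; auto| apply ctn_RI; auto]. }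
  rewrite (integ_RI prf), (integ_RI (ctn_RI g a b Hg)).
  destruct (Rle_dec a b) as [Hab|Hab].
  - apply RiemannInt_P18; auto. intros x Hx; apply Hfg.
    rewrite Rmin_left, Rmax_right; lra.
  - rewrite (RiemannInt_P8 prf (RiemannInt_P1 prf)), (RiemannInt_P8 (ctn_RI g a b Hg) (ctn_RI g b a Hg)).
    f_equal. apply RiemannInt_P18; [lra|]. intros x Hx; apply Hfg.
    rewrite Rmin_right, Rmax_left; lra.
Qed.

Lemma integ_deriv f a x : ctn f -> derivable_pt_lim (fun y => integral f a y) x (f x).
Proof.
  intros Hf.
  set (lo := Rmin a x - 1). set (hi := Rmax a x + 1).
  assert (Hlh : lo <= hi) by (unfold lo, hi; generalize (Rmin_l a x) (Rmax_l a x); lra).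
  assert (C0 : forall y, lo <= y <= hi -> continuity_pt f y) by auto.
  apply derivable_pt_lim_locally_ext with (f := fun y => primitive Hlh (FTC_P1 Hlh C0) y - integral f lo a) (a := lo) (b := hi).
  - unfold lo, hi; generalize (Rmin_r a x) (Rmax_r a x); lra.
  - intros z Hz. unfold primitive. destruct (Rle_dec lo z); [|lra]. destruct (Rle_dec z hi); [|lra].
    rewrite <- integ_RI. rewrite <- (integ_chasles f lo a z Hf). ring.
  - replace (f x) with (f x - 0) by ring. apply derivable_pt_lim_minus.
    + apply RiemannInt_P28. unfold lo, hi; generalize (Rmin_r a x) (Rmax_r a x); lra.
    + apply derivable_pt_lim_const.
Qed.

Definition ahat (al al' : R -> R) (s : R) : R :=
  if Rle_dec 0 s then al s else al 0 + al' 0 * s.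

Lemma ahat_pos al al' s : 0 <= s -> ahat al al' s = al s.
Proof. intros; unfold ahat; destruct (Rle_dec 0 s); lra. Qed.

Lemma ahat_deriv al al' c : deriv_nonneg al al' -> 0 <= c -> derivable_pt_lim (ahat al al') c (al' c).
Proof.
  intros Hd Hc eps He.
  destruct (Hd c Hc eps He) as [d [Hdp Hy]].
  destruct Hc as [Hc|Hc].
  - assert (Hm : 0 < Rmin d c) by (apply Rmin_pos; lra).
    exists (mkposreal _ Hm). simpl. intros h Hh Hlt.
    assert (Hmd := Rmin_l d c). assert (Hmc := Rmin_r d c).
    rewrite !ahat_pos by (split_Rabs; lra).
    specialize (Hy (c + h)). replace (c + h - c) with h in Hy by ring.
    apply Hy; [split_Rabs; lra | lra | lra].
  - subst c. exists (mkposreal _ Hdp). simpl. intros h Hh Hlt.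
    destruct (Rle_dec 0 h) as [Hp|Hn].
    + rewrite !ahat_pos by lra. specialize (Hy (0 + h)). replace (0 + h - 0) with h in Hy by ring.
      apply Hy; [lra| lra | exact Hlt].
    + unfold ahat. destruct (Rle_dec 0 (0 + h)); [lra|]. destruct (Rle_dec 0 0); [|lra].
      replace ((al 0 + al' 0 * (0 + h) - al 0) / h - al' 0) with 0.
      * rewrite Rabs_R0; lra.
      * field; lra.
Qed.

Lemma deriv_nonneg_pos al al' c : deriv_nonneg al al' -> nondecr_nonneg al -> 0 < c -> 0 <= al' c.
Proof.
  intros Hd Hm Hc. destruct (Rle_dec 0 (al' c)) as [|Hn]; auto. exfalso.
  destruct (Hd c (Rlt_le _ _ Hc) (- al' c / 2)) as [d [Hdp Hy]]; [lra|].
  specialize (Hy (c + d / 2)). replace (c + d / 2 - c) with (d / 2) in Hy by ring.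
  assert (Hq : 0 <= (al (c + d / 2) - al c) / (d / 2)).
  { unfold Rdiv; apply Rmult_le_pos; [| left; apply Rinv_0_lt_compat; lra]. assert (al c <= al (c + d/2)) by (apply Hm; lra). lra. }
  assert (Habs : Rabs (d / 2) < d) by (rewrite Rabs_pos_eq; lra).
  specialize (Hy ltac:(lra) ltac:(lra) Habs). split_Rabs; lra.
Qed.

Lemma deriv_cont al al' : deriv_nonneg al al' -> cont_nonneg al.
Proof.
  intros Hd x Hx eps He.
  destruct (Hd x Hx 1 Rlt_0_1) as [d [Hdp Hy]].
  set (M := Rabs (al' x) + 1).
  assert (HM : 0 < M) by (unfold M; generalize (Rabs_pos (al' x)); lra).
  exists (Rmin d (eps / M)). split; [apply Rmin_pos; [lra| apply Rdiv_lt_0_compat; lra]|].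
  intros y Hy0 Hyx. assert (H1 := Rmin_l d (eps / M)). assert (H2 := Rmin_r d (eps / M)).
  destruct (Req_dec y x) as [->|Hne].
  - unfold Rminus; rewrite Rplus_opp_r, Rabs_R0; lra.
  - specialize (Hy y Hy0 Hne ltac:(lra)).
    assert (Hq : Rabs ((al y - al x) / (y - x)) <= M).
    { unfold M. assert (Ht := Rabs_triang ((al y - al x) / (y - x) - al' x) (al' x)).
      replace ((al y - al x) / (y - x) - al' x + al' x) with ((al y - al x) / (y - x)) in Ht by ring. lra. }
    replace (al y - al x) with ((al y - al x) / (y - x) * (y - x)) by (field; lra).
    rewrite Rabs_mult.
    apply Rle_lt_trans with (M * Rabs (y - x)).
    + apply Rmult_le_compat_r; [apply Rabs_pos| exact Hq].
    + apply Rlt_le_trans with (M * (eps / M)); [apply Rmult_lt_compat_l; lra|].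
      right; field; lra.
Qed.

Lemma ctn_K f u w n : cont_nonneg f -> cont_nonneg u -> nonneg_valued u -> cont_nonneg w -> 0 < n ->
  ctn (fun s => f (Rmax 0 s) * rpow (u (Rmax 0 s)) n * w (u (Rmax 0 s))).
Proof.
  intros Hf Hu Hup Hw Hn x.
  assert (H1 := ctn_max0 f Hf x).
  assert (Hu' := ctn_max0 u Hu x).
  assert (H2 : continuity_pt (fun s => rpow (u (Rmax 0 s)) n) x).
  { exact (continuity_pt_comp (fun s => u (Rmax 0 s)) (fun y => rpow y n) x Hu' (ctn_rpow n Hn _)). }
  assert (H3 : continuity_pt (fun s => w (u (Rmax 0 s))) x).
  { apply comp_nonneg; auto. intros s; apply Hup, Rmax_l. }
  exact (continuity_pt_mult (fun s => f (Rmax 0 s) * rpow (u (Rmax 0 s)) n) (fun s => w (u (Rmax 0 s))) x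
    (continuity_pt_mult _ _ x H1 H2) H3).
Qed.

Lemma ctn_ha w a k : cont_nonneg w -> (forall x, 0 < x -> 0 < w x) -> 0 < a -> 0 < k ->
  ctn (fun s => / w (rpow (Rmax a s) (/ k))).
Proof.
  intros Hw Hwpos Ha Hk x.
  assert (Hq : forall s, 0 < rpow (Rmax a s) (/ k)).
  { intros s. rewrite rpow_pos by (generalize (Rmax_l a s); lra). apply Rpower_pos. }
  assert (H1 : continuity_pt (fun s => rpow (Rmax a s) (/ k)) x).
  { exact (continuity_pt_comp (fun s => Rmax a s) (fun y => rpow y (/ k)) x (ctn_Rmax a x)
      (ctn_rpow (/ k) (Rinv_0_lt_compat _ Hk) _)). }
  assert (H2 : continuity_pt (fun s => w (rpow (Rmax a s) (/ k))) x).
  { apply comp_nonneg; auto. intros s; left; apply Hq. }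
  exact (continuity_pt_inv _ x H2 (Rgt_not_eq _ _ (Hwpos _ (Hq x)))).
Qed.

Theorem corollary3 (m n c : R) (f g w alpha u : R -> R) (tau : R) :
  0 < n -> n < m -> 0 < c ->
  C0_nonneg f -> C0_nonneg g ->
  C0_nonneg w -> nondecr_nonneg w -> (forall x, 0 < x -> 0 < w x) ->
  C1_nonneg alpha -> nondecr_nonneg alpha -> (forall t, 0 <= t -> alpha t <= t) ->
  C0_nonneg u ->
  (forall t, 0 <= t ->
     rpow (u t) m <=
       rpow c (m / (m - n)) +
       m / (m - n) *
         (integral (fun s => f s * rpow (u s) n * w (u s)) 0 (alpha t) +
          integral (fun s => g s * rpow (u s) n * w (u s)) 0 t)) ->
  0 < tau ->
  (forall t, 0 <= t <= tau ->
     in_Dom_Psi_inv w (m - n)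
       (Psi w (m - n) c + integral f 0 (alpha t) + integral g 0 t)) ->
  forall t, 0 <= t <= tau ->
    u t <= rpow (Psi_inv w (m - n)
                   (Psi w (m - n) c + integral f 0 (alpha t) + integral g 0 t))
                (/ (m - n)).
Proof.
  intros Hn Hnm Hc [Hfc Hfp] [Hgc Hgp] [Hwc Hwp] Hwm Hwpos [Hap [al' [Hd Hal'c]]] Ham Hat
    [Huc Hup] Hineq Htau Hdom t Ht.
  assert (Hk : 0 < m - n) by lra.
  assert (Hm : 0 < m) by lra.
  set (k := m - n) in *.
  set (p := m / k) in *.
  assert (Hp : 0 < p) by (unfold p; apply Rdiv_lt_0_compat; lra).
  set (C := Rpower c p).
  assert (HC : 0 < C) by apply Rpower_pos.
  assert (Hrc : rpow c p = C) by (apply rpow_pos; lra).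
  rewrite Hrc in Hineq.
  set (G0 := Psi w k c + integral f 0 (alpha t) + integral g 0 t).
  destruct (epsilon_spec (inhabits 1) (fun x => 0 < x /\ Psi w k x = G0) (Hdom t Ht)) as [Hxs HPxs].
  fold (Psi_inv w k G0) in Hxs, HPxs.
  set (xs := Psi_inv w k G0) in *.
  set (a := Rmin 1 (Rmin c xs)).
  assert (Ha : 0 < a) by (unfold a; repeat apply Rmin_pos; lra).
  assert (Ha1 : a <= 1) by apply Rmin_l.
  assert (Hac : a <= c) by (unfold a; eapply Rle_trans; [apply Rmin_r| apply Rmin_l]).
  assert (Haxs : a <= xs) by (unfold a; eapply Rle_trans; [apply Rmin_r| apply Rmin_r]).
  set (Kf := fun s => f (Rmax 0 s) * rpow (u (Rmax 0 s)) n * w (u (Rmax 0 s))).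
  set (Kg := fun s => g (Rmax 0 s) * rpow (u (Rmax 0 s)) n * w (u (Rmax 0 s))).
  set (ft := fun s => f (Rmax 0 s)).
  set (gt := fun s => g (Rmax 0 s)).
  set (ha := fun s => / w (rpow (Rmax a s) (/ k))).
  assert (cKf : ctn Kf) by (apply ctn_K; auto).
  assert (cKg : ctn Kg) by (apply ctn_K; auto).
  assert (cft : ctn ft) by (apply ctn_max0; auto).
  assert (cgt : ctn gt) by (apply ctn_max0; auto).
  assert (cha : ctn ha) by (apply ctn_ha; auto).
  assert (pKf : forall s, 0 <= Kf s).
  { intros s; unfold Kf. apply Rmult_le_pos; [apply Rmult_le_pos|]; auto using rpow_nonneg, Rmax_l. }
  assert (pKg : forall s, 0 <= Kg s).
  { intros s; unfold Kg. apply Rmult_le_pos; [apply Rmult_le_pos|]; auto using rpow_nonneg, Rmax_l. }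
  assert (pha : forall s, 0 < ha s).
  { intros s; unfold ha. apply Rinv_0_lt_compat, Hwpos. rewrite rpow_pos by (generalize (Rmax_l a s); lra).
    apply Rpower_pos. }
  set (A := ahat alpha al').
  set (Pf := fun x => integral Kf 0 x).
  set (Pg := fun x => integral Kg 0 x).
  set (F := fun x => integral ft 0 x).
  set (Gg := fun x => integral gt 0 x).
  set (Pa := fun x => integral ha 1 x).
  set (Z := fun s => C + p * (Pf (A s) + Pg s)).
  set (Y := fun s => Rpower (Z s) (k / m)).
  set (H := fun s => Pa (Y s) - (Pa c + F (A s) + Gg s)).
  assert (Hal0 : alpha 0 = 0) by (generalize (Hat 0 (Rle_refl 0)) (Hap 0 (Rle_refl 0)); lra).
  assert (HA : forall s, 0 <= s -> A s = alpha s) by (intros; unfold A; apply ahat_pos; auto).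
  assert (HZge : forall s, 0 <= s -> C <= Z s).
  { intros s Hs. unfold Z. rewrite HA by auto.
    assert (0 <= Pf (alpha s)) by (apply integ_nonneg; auto).
    assert (0 <= Pg s) by (apply integ_nonneg; auto).
    assert (0 <= p * (Pf (alpha s) + Pg s)) by (apply Rmult_le_pos; lra). lra. }
  assert (HZmono : forall r s, 0 <= r <= s -> Z r <= Z s).
  { intros r s Hrs. unfold Z. rewrite !HA by lra.
    assert (Pf (alpha r) <= Pf (alpha s)) by (apply integ_mono; auto; apply Ham; lra).
    assert (Pg r <= Pg s) by (apply integ_mono; auto; lra).
    apply Rplus_le_compat_l, Rmult_le_compat_l; lra. }
  assert (Hhyp : forall r, 0 <= r -> rpow (u r) m <= Z r).
  { intros r Hr. eapply Rle_trans; [apply Hineq; auto|]. unfold Z. rewrite HA by auto.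
    right. f_equal. f_equal. f_equal.
    - apply integ_ext; auto. intros x Hx. rewrite Rmin_left, Rmax_right in Hx by (apply Hap; auto).
      unfold Kf. now rewrite Rmax_right by lra.
    - apply integ_ext; auto. intros x Hx. rewrite Rmin_left, Rmax_right in Hx by auto.
      unfold Kg. now rewrite Rmax_right by lra. }
  assert (Hbnd : forall r s, 0 <= r <= s ->
    rpow (u r) n <= Rpower (Z s) (n / m) /\ w (u r) <= w (Rpower (Z s) (/ m))).
  { intros r s Hrs.
    assert (HZs : 0 < Z s) by (generalize (HZge s ltac:(lra)); lra).
    assert (Hur : rpow (u r) m <= Z s) by (eapply Rle_trans; [apply Hhyp; lra| apply HZmono; lra]).
    assert (Hur0 := Hup r ltac:(lra)).
    assert (HQ : 0 < Rpower (Z s) (/ m)) by apply Rpower_pos.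
    assert (Hle : u r <= Rpower (Z s) (/ m)).
    { destruct (Rle_dec (u r) 0) as [H0|H0]; [lra|].
      rewrite rpow_pos in Hur by lra.
      destruct (Rle_dec (u r) (Rpower (Z s) (/ m))) as [|Hgt]; auto. exfalso.
      assert (Hlt : Rpower (Rpower (Z s) (/ m)) m < Rpower (u r) m) by (apply Rlt_Rpower_l; lra).
      rewrite Rpower_mult, Rinv_l, Rpower_1 in Hlt by lra. lra. }
    split.
    - destruct (Rle_dec (u r) 0) as [H0|H0].
      + unfold rpow. destruct (Rle_dec (u r) 0); [|lra]. left; apply Rpower_pos.
      + rewrite rpow_pos by lra. replace (n / m) with (/ m * n) by (field; lra).
        rewrite <- Rpower_mult. apply Rle_Rpower_l; lra.
    - apply Hwm; auto. }
  set (H' := fun s => ha (Y s) * ((k / m) * Rpower (Z s) (k / m - 1) * (p * (Kf (A s) * al' s + Kg s)))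
     - (ft (A s) * al' s + gt s)).
  assert (dH : forall s, 0 <= s -> derivable_pt_lim H s (H' s)).
  { intros s Hs.
    assert (dA : derivable_pt_lim A s (al' s)) by (apply ahat_deriv; auto).
    assert (dPfA : derivable_pt_lim (fun s => Pf (A s)) s (Kf (A s) * al' s))
      by exact (derivable_pt_lim_comp A Pf s _ _ dA (integ_deriv Kf 0 (A s) cKf)).
    assert (dPg : derivable_pt_lim Pg s (Kg s)) by exact (integ_deriv Kg 0 s cKg).
    assert (dZ : derivable_pt_lim Z s (p * (Kf (A s) * al' s + Kg s))).
    { rewrite <- (Rplus_0_l (p * _)).
      exact (derivable_pt_lim_plus (fct_cte C) (mult_real_fct p (fun s => Pf (A s) + Pg s)) s _ _
        (derivable_pt_lim_const C s)
        (derivable_pt_lim_scal _ p s _ (derivable_pt_lim_plus _ _ s _ _ dPfA dPg))). }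
    assert (HZs : 0 < Z s) by (generalize (HZge s Hs); lra).
    assert (dY : derivable_pt_lim Y s ((k / m) * Rpower (Z s) (k / m - 1) * (p * (Kf (A s) * al' s + Kg s))))
      by exact (derivable_pt_lim_comp Z (fun x => Rpower x (k / m)) s _ _ dZ (derivable_pt_lim_power (Z s) (k / m) HZs)).
    assert (dPaY : derivable_pt_lim (fun s => Pa (Y s)) s
       (ha (Y s) * ((k / m) * Rpower (Z s) (k / m - 1) * (p * (Kf (A s) * al' s + Kg s)))))
      by exact (derivable_pt_lim_comp Y Pa s _ _ dY (integ_deriv ha 1 (Y s) cha)).
    assert (dFA : derivable_pt_lim (fun s => F (A s)) s (ft (A s) * al' s))
      by exact (derivable_pt_lim_comp A F s _ _ dA (integ_deriv ft 0 (A s) cft)).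
    assert (dGg : derivable_pt_lim Gg s (gt s)) by exact (integ_deriv gt 0 s cgt).
    assert (dG : derivable_pt_lim (fun s => Pa c + F (A s) + Gg s) s (ft (A s) * al' s + gt s)).
    { rewrite <- (Rplus_0_l (ft (A s) * al' s)).
      exact (derivable_pt_lim_plus (fun s => Pa c + F (A s)) Gg s _ _
        (derivable_pt_lim_plus (fct_cte (Pa c)) (fun s => F (A s)) s _ _ (derivable_pt_lim_const (Pa c) s) dFA) dGg). }
    exact (derivable_pt_lim_minus _ _ s _ _ dPaY dG). }
  assert (Hpkm : p * (k / m) = 1) by (unfold p; field; lra).
  assert (HYge : forall s, 0 <= s -> c <= Y s).
  { intros s Hs. unfold Y. replace c with (Rpower C (k / m)).
    - apply Rle_Rpower_l; [left; apply Rdiv_lt_0_compat; lra| split; auto].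
    - unfold C. rewrite Rpower_mult, Hpkm. apply Rpower_1; lra. }
  assert (Hneg : forall s, 0 < s <= t -> H' s <= 0).
  { intros s Hs.
    assert (HZs : 0 < Z s) by (generalize (HZge s ltac:(lra)); lra).
    set (E := Rpower (Z s) (n / m)).
    set (Q := Rpower (Z s) (/ m)).
    assert (HE : 0 < E) by apply Rpower_pos.
    assert (HQ : 0 < Q) by apply Rpower_pos.
    assert (HW : 0 < w Q) by auto.
    assert (Hha : ha (Y s) = / w Q).
    { unfold ha. assert (Hy := HYge s ltac:(lra)).
      rewrite Rmax_right by lra. rewrite rpow_pos by lra. unfold Y, Q. rewrite Rpower_mult.
      do 3 f_equal. field; lra. }
    assert (HX : Rpower (Z s) (k / m - 1) = / E).
    { assert (Hp1 : Rpower (Z s) (k / m - 1) * E = 1).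
      { unfold E. rewrite <- Rpower_plus. replace (k / m - 1 + n / m) with 0 by (unfold k; field; lra).
        apply Rpower_O; lra. }
      apply (Rmult_eq_reg_r E); [rewrite Hp1; field; lra | lra]. }
    assert (Has := Hap s ltac:(lra)).
    assert (Hast := Hat s ltac:(lra)).
    assert (Ha' : 0 <= al' s) by (apply (deriv_nonneg_pos alpha); auto; lra).
    assert (Hf1 : Kf (A s) <= f (alpha s) * E * w Q).
    { rewrite HA by lra. unfold Kf. rewrite Rmax_right by lra.
      destruct (Hbnd (alpha s) s ltac:(lra)) as [B1 B2].
      assert (0 <= f (alpha s)) by auto.
      apply Rmult_le_compat; auto.
      - apply Rmult_le_pos; auto using rpow_nonneg.
      - apply Rmult_le_compat_l; auto. }
    assert (Hg1 : Kg s <= g s * E * w Q).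
    { unfold Kg. rewrite Rmax_right by lra.
      destruct (Hbnd s s ltac:(lra)) as [B1 B2].
      assert (0 <= g s) by (apply Hgp; lra).
      assert (0 <= w (u s)) by (apply Hwp, Hup; lra).
      apply Rmult_le_compat; auto.
      - apply Rmult_le_pos; auto using rpow_nonneg. 
      - apply Rmult_le_compat_l; auto. }
    unfold H'. rewrite Hha, HX. unfold ft, gt. rewrite HA in Hf1 |- * by lra. rewrite !(Rmax_right 0) by lra.
    set (S := Kf (alpha s) * al' s + Kg s).
    assert (HS : S <= (f (alpha s) * al' s + g s) * (E * w Q)).
    { unfold S. assert (Kf (alpha s) * al' s <= f (alpha s) * E * w Q * al' s) by (apply Rmult_le_compat_r; auto). nra. }
    replace (/ w Q * (k / m * / E * (p * S))) with (S * / (E * w Q) * (p * (k / m))) by (field; lra).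
    rewrite Hpkm, Rmult_1_r.
    assert (S * / (E * w Q) <= (f (alpha s) * al' s + g s) * (E * w Q) * / (E * w Q)).
    { apply Rmult_le_compat_r; auto. left; apply Rinv_0_lt_compat, Rmult_lt_0_compat; auto. }
    replace ((f (alpha s) * al' s + g s) * (E * w Q) * / (E * w Q)) with (f (alpha s) * al' s + g s) in H0
      by (field; lra).
    lra. }
  assert (HH0 : H 0 = 0).
  { unfold H. assert (HA0 : A 0 = 0) by (rewrite HA by lra; exact Hal0).
    assert (HY0 : Y 0 = c).
    { unfold Y, Z. rewrite HA0. unfold Pf, Pg. rewrite !integ_aa, Rplus_0_r, Rmult_0_r, Rplus_0_r.
      unfold C. rewrite Rpower_mult, Hpkm. apply Rpower_1; lra. }
    rewrite HY0, HA0. unfold F, Gg. rewrite !integ_aa. ring. }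
  assert (Ht0 : H t <= 0).
  { destruct (Rle_lt_or_eq_dec 0 t (proj1 Ht)) as [Htp|Hte].
    - destruct (MVT_cor2 H H' 0 t Htp (fun c0 Hc0 => dH c0 (proj1 Hc0))) as [c0 [Heq Hc0]].
      assert (H' c0 <= 0) by (apply Hneg; lra).
      assert (H' c0 * (t - 0) <= 0) by (rewrite Rminus_0_r; nra).
      lra.
    - subst t. lra. }
  assert (Hamin : forall x y, a <= x -> a <= y -> a <= Rmin x y) by (intros; apply Rmin_glb; auto).
  assert (HPa : forall x, a <= x -> Pa x = Psi w k x).
  { intros x Hx. unfold Pa, Psi. symmetry. apply integ_ext; auto.
    intros y Hy. assert (a <= y) by (generalize (Hamin 1 x Ha1 Hx); lra).
    unfold ha. now rewrite Rmax_right by lra. }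
  assert (HYxs : Pa (Y t) <= Pa xs).
  { rewrite (HPa xs Haxs), HPxs. unfold G0. rewrite <- (HPa c Hac).
    unfold H in Ht0.
    assert (E1 : F (A t) = integral f 0 (alpha t)).
    { rewrite HA by lra. unfold F. symmetry. apply integ_ext; auto. intros x Hx.
      rewrite Rmin_left, Rmax_right in Hx by (apply Hap; lra). unfold ft. now rewrite Rmax_right by lra. }
    assert (E2 : Gg t = integral g 0 t).
    { unfold Gg. symmetry. apply integ_ext; auto. intros x Hx.
      rewrite Rmin_left, Rmax_right in Hx by lra. unfold gt. now rewrite Rmax_right by lra. }
    lra. }
  assert (HYt : Y t <= xs).
  { destruct (Rle_dec (Y t) xs) as [|Hgt]; auto. exfalso.
    destruct (MVT_cor2 Pa ha xs (Y t) ltac:(lra) (fun c0 _ => integ_deriv ha 1 c0 cha)) as [c0 [Heq _]].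
    assert (0 < ha c0 * (Y t - xs)) by (apply Rmult_lt_0_compat; [apply pha| lra]).
    lra. }
  assert (HZt : 0 < Z t) by (generalize (HZge t ltac:(lra)); lra).
  assert (HYpos : 0 < Y t) by apply Rpower_pos.
  rewrite rpow_pos by lra.
  destruct (Rle_dec (u t) 0) as [Hu0|Hu0].
  - left; eapply Rle_lt_trans; [exact Hu0| apply Rpower_pos].
  - destruct (Rle_dec (u t) (Rpower xs (/ k))) as [|Hgt]; auto. exfalso.
    assert (Hlt : Rpower (Rpower xs (/ k)) m < Rpower (u t) m) by (apply Rlt_Rpower_l; [lra| split; [apply Rpower_pos| lra]]).
    assert (Hle1 : Rpower (u t) m <= Z t) by (assert (HH := Hhyp t ltac:(lra)); rewrite rpow_pos in HH by lra; exact HH).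
    assert (HZY : Z t = Rpower (Y t) (m / k)).
    { unfold Y. rewrite Rpower_mult. replace (k / m * (m / k)) with 1 by (field; lra).
      symmetry; apply Rpower_1; lra. }
    assert (Hle2 : Rpower (Y t) (m / k) <= Rpower xs (m / k))
      by (apply Rle_Rpower_l; [left; apply Rdiv_lt_0_compat; lra| lra]).
    rewrite Rpower_mult in Hlt. replace (/ k * m) with (m / k) in Hlt by (field; lra).
    lra.
Qed.
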